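(* Let $(\mathbf{x}^*,\mathbf{u}^* )$ be an optimal solution of problem (P), and let $\pi^*\in\mathbb{R}$ and $q_i$ ($i\in[N]$) be multipliers associated with it as described in the context. Then for each $i\in[N]$ and a.e. $t\in[0,T]$: $u_i^*(t)=1$ if $\pi^*-\pi(t)-\beta_i q_i(t)>0$; $u_i^*(t)=0$ if $\pi^*-\pi(t)-\beta_i q_i(t)<0$; $u_i^*(t)=\underline{u}_i(t)$ if $\pi^*-\pi(t)-\beta_i q_i(t)=0$ and $x_i^*(t)=L_i$; $u_i^*(t)=\overline{u}_i(t)$ if $\pi^*-\pi(t)-\beta_i q_i(t)=0$ and $x_i^*(t)=U_i$.
   Context: Data: integers $N\ge 1$, $T>0$, $E>0$, real constants $\alpha_i,\beta_i$, $L_i<U_i$, $x_{i0}$ ($i\in[N]:=\{1,\dots,N\}$), price $\pi:[0,T]\to\mathbb{R}$, ambient temperature $\hat{x}:[0,T]\to\mathbb{R}$ with $\hat{x}(t)>\max_iU_i$. Problem (P): over measurable $u_i:[0,T]\to[0,1]$, minimize $\int_0^T\pi(t)\sum_iu_i(t)dt$ subject to $\dot{x}_i=-\alpha_i(x_i-\hat{x}(t))-\beta_iu_i$ a.e., $x_i(0)=x_{i0}$; $\dot{x}_{N+1}=\sum_iu_i$, $x_{N+1}(0)=0$, $x_{N+1}(T)=E$; $L_i\le x_i(t)\le U_i$ for all $t$. Define $\overline{u}_i(t):=\frac{\alpha_i}{\beta_i}(\hat{x}(t)-U_i)$, $\underline{u}_i(t):=\frac{\alpha_i}{\beta_i}(\hat{x}(t)-L_i)$.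 Standing assumptions (A1): $L_i\le x_{i0}\le U_i$; $E\in[\overline{E},\underline{E})$, $\overline{E}:=\int_0^T\sum_i\max\{0,\overline{u}_i\}dt$, $\underline{E}:=\int_0^T\sum_i\min\{\underline{u}_i,1\}dt$; for all $i,t$: $-\alpha_i(L_i-\hat{x}(t))>0$ and $-\alpha_i(U_i-\hat{x}(t))-\beta_i<0$. (A2): $\pi,\hat{x}$ differentiable; $\pi$ not of form $Ae^{\alpha_it}+B$ on any subinterval of positive measure. Multipliers: a scalar $\pi^*$, absolutely continuous $p_i$, functions $q_i$ and positive Radon measures $\mu_i,\ell_i$ on $[0,T]$ with $\dot{p}_i=\alpha_iq_i$ a.e., $q_i(t)=p_i(t)+\mu_i([0,t))-\ell_i([0,t))$ for $t<T$, $q_i(T)=p_i(T)+\mu_i([0,T])-\ell_i([0,T])=0$, $\operatorname{supp}\ell_i\subset\{x_i^*=L_i\}$, $\operatorname{supp}\mu_i\subset\{x_i^*=U_i\}$, and for a.e. $t$ and all $u\in[0,1]^N$: $\sum_i(\pi^*-\pi(t)-\beta_iq_i(t))u_i^*(t)\ge\sum_i(\pi^*-\pi(t)-\beta_iq_i(t))u_i$. *)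

(* Defs.v *)
From HB Require Import structures.
From mathcomp Require Import all_boot all_order all_algebra.
From mathcomp Require Import all_classical all_reals all_analysis.
Set Implicit Arguments. Unset Strict Implicit. Unset Printing Implicit Defensive.
Import Order.TTheory GRing.Theory Num.Theory.
Import numFieldNormedType.Exports.
Local Open Scope classical_set_scope.
Local Open Scope ring_scope.

Section Defs.
Variable R : realType.

Definition leb : set (measurableTypeR R) -> \bar R := @lebesgue_measure R.

Definition abs_cont (a b : R) (f : R -> R) :=
  forall e : R, 0 < e -> exists2 d : R, 0 < d &
    forall (n : nat) (s t : nat -> R),
      (forall k, (k < n)%N -> a <= s k /\ s k <= t k /\ t k <= b) ->
      (forall k, (k.+1 < n)%N -> t k <= s k.+1) ->
      \sum_(k < n) (t k - s k) < d ->
      \sum_(k < n) `|f (t k) - f (s k)| < e.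

Definition differentiable_cc (a b : R) (f : R -> R) :=
  [/\ forall t, a < t < b -> derivable f t 1,
      cvg ((fun h : R => h^-1 * (f (a + h) - f a)) @ 0^'+) &
      cvg ((fun h : R => h^-1 * (f (b + h) - f b)) @ 0^'-)].

Definition msupp (m : set (measurableTypeR R) -> \bar R) : set R :=
  [set t | forall e : R, 0 < e -> (0 < m (ball t e))%E].

Variables (N : nat) (T E : R) (alpha beta L U x0 : 'I_N -> R) (pi xhat : R -> R).

Definition I0T : set R := `[0, T]%classic.

Definition uover (i : 'I_N) (t : R) : R := alpha i / beta i * (xhat t - U i).
Definition uunder (i : 'I_N) (t : R) : R := alpha i / beta i * (xhat t - L i).

Definition Eover : \bar R :=
  (\int[leb]_(t in I0T) (\sum_(i < N) Num.max 0 (uover i t))%:E)%E.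
Definition Eunder : \bar R :=
  (\int[leb]_(t in I0T) (\sum_(i < N) Num.min (uunder i t) 1)%:E)%E.

(* feasibility for problem (P): states x_1..x_N (x), x_{N+1} (y), controls u *)
Definition feasible (x : 'I_N -> R -> R) (y : R -> R) (u : 'I_N -> R -> R) :=
  [/\ (forall i, measurable_fun I0T (u i)),
      (forall i t, 0 <= t <= T -> 0 <= u i t <= 1),
      (forall i, [/\ abs_cont 0 T (x i), x i 0 = x0 i &
                 forall t, 0 <= t <= T -> L i <= x i t <= U i]),
      (forall i, {ae leb, forall t : R, I0T t ->
          is_derive t 1 (x i) (- alpha i * (x i t - xhat t) - beta i * u i t)})
      & [/\ abs_cont 0 T y, y 0 = 0, y T = E &
          {ae leb, forall t : R, I0T t -> is_derive t 1 y (\sum_(i < N) u i t)}]].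

Definition cost (u : 'I_N -> R -> R) : \bar R :=
  (\int[leb]_(t in I0T) (pi t * \sum_(i < N) u i t)%:E)%E.

Definition optimal (x : 'I_N -> R -> R) (y : R -> R) (u : 'I_N -> R -> R) :=
  feasible x y u /\
  forall x' y' u', feasible x' y' u' -> (cost u <= cost u')%E.

Definition multipliers (x u : 'I_N -> R -> R) (pistar : R) (p q : 'I_N -> R -> R)
  (mu l : 'I_N -> {finite_measure set (measurableTypeR R) -> \bar R}) :=
  [/\ (forall i, mu i (~` I0T) = 0%E /\ l i (~` I0T) = 0%E),
      (forall i, abs_cont 0 T (p i) /\
         {ae leb, forall t : R, I0T t -> is_derive t 1 (p i) (alpha i * q i t)}),
      (forall i t, 0 <= t < T ->
         ((q i t)%:E = (p i t)%:E + mu i [set s : R | (0 <= s < t)%R]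
                                   - l i [set s : R | (0 <= s < t)%R])%E),
      (forall i, q i T = 0 /\
         ((p i T)%:E + mu i I0T - l i I0T = 0)%E) /\
      (forall i, msupp (l i) `<=` [set t | x i t = L i] /\
                 msupp (mu i) `<=` [set t | x i t = U i]) &
      {ae leb, forall t : R, I0T t -> forall v : 'I_N -> R,
          (forall i, 0 <= v i <= 1) ->
          \sum_(i < N) (pistar - pi t - beta i * q i t) * v i <=
          \sum_(i < N) (pistar - pi t - beta i * q i t) * u i t}].

End Defs.

(* Main.v *)
Require Import Defs.
From HB Require Import structures.
From mathcomp Require Import all_boot all_order all_algebra.
From mathcomp Require Import all_classical all_reals all_analysis.
From mathcomp Require Import ring.
Import Order.TTheory GRing.Theory Num.Theory.
Import numFieldNormedType.Exports.
Local Open Scope classical_set_scope.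
Local Open Scope ring_scope.


Lemma fermat_min (R : realFieldType) (f : R -> R) (a b c : R) :
  a <= b -> derivable f c 1 -> c \in `]a, b[%R ->
  (forall t, t \in `]a, b[%R -> f c <= f t) -> is_derive c 1 (- f) 0.
Proof.
move=> leab fdrvbl0 cab cmin.
have fdrvbl : derivable (- f) c 1 by exact/derivableN.
have cmax : forall t, t \in `]a, b[%R -> (- f) t <= (- f) c.
  by move=> t /cmin; rewrite /= lerN2.
move: (- f) fdrvbl cmax => {cmin fdrvbl0} f fdrvbl cmax.
apply: DeriveDef; first exact: fdrvbl.
apply/eqP; rewrite eq_le; apply/andP; split.
  rewrite ['D_1 f c]cvg_at_rightE; last exact: fdrvbl.
  apply: limr_le.
    have dfc := fdrvbl.
    rewrite -(cvg_at_rightE (fun h : R => h^-1 *: ((f \o shift c) _ - f c))) //.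
    apply: cvg_trans dfc; apply: cvg_app.
    move=> A [e egt0 Ae]; exists e => // x xe xgt0; apply: Ae => //.
    exact/lt0r_neq0.
  near=> h; apply: mulr_ge0_le0.
    by rewrite invr_ge0; apply: ltW; near: h; exists 1 => /=.
  rewrite subr_le0 [_%:A]mulr1; apply: cmax; near: h.
  exists (b - c); first by rewrite /= subr_gt0 (itvP cab).
  move=> h; rewrite /= distrC subr0 /= in_itv /= -ltrBrDr.
  move=> /(le_lt_trans (ler_norm _)) -> /ltr_pDl -> //.
  by rewrite (itvP cab).
rewrite ['D_1 f c]cvg_at_leftE; last exact: fdrvbl.
apply: limr_ge.
  have dfc := fdrvbl; rewrite -(cvg_at_leftE (fun h => h^-1 *: ((f \o shift c) _ - f c))) //.
  apply: cvg_trans dfc; apply: cvg_app.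
  move=> A [e egt0 Ae]; exists e => // x xe xgt0; apply: Ae => //.
  exact/ltr0_neq0.
near=> h; apply: mulr_le0.
  by rewrite invr_le0; apply: ltW; near: h; exists 1 => /=.
rewrite subr_le0 [_%:A]mulr1; apply: cmax; near: h.
exists (c - a); first by rewrite /= subr_gt0 (itvP cab).
move=> h; rewrite /= distrC subr0.
move=> /ltr_normlP []; rewrite ltrBrDl ltrBlDl in_itv /= => -> _.
by move=> /ltr_nDl -> //; rewrite (itvP cab).
Unshelve. all: by end_near. Qed.
Arguments fermat_min {R f a b c}.

Theorem lemma1 (R : realType) (N : nat) (T E : R)
  (alpha beta L U x0 : 'I_N -> R) (pi xhat : R -> R)
  (HN : (1 <= N)%N) (HT : 0 < T) (HE : 0 < E)
  (HLU : forall i, L i < U i)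
  (Hxhat : forall t : R, 0 <= t <= T -> forall i, U i < xhat t)
  (* (A1) *)
  (Hx0 : forall i, L i <= x0 i <= U i)
  (HEb : (Eover T alpha beta U xhat <= E%:E < Eunder T alpha beta L xhat)%E)
  (HL : forall i (t : R), 0 <= t <= T -> 0 < - alpha i * (L i - xhat t))
  (HU : forall i (t : R), 0 <= t <= T -> - alpha i * (U i - xhat t) - beta i < 0)
  (* (A2) *)
  (Hpi : differentiable_cc 0 T pi) (Hxh : differentiable_cc 0 T xhat)
  (Hpi_exp : forall i (A B a b : R), 0 <= a -> a < b -> b <= T ->
      ~ (forall t, a <= t <= b -> pi t = A * expR (alpha i * t) + B))
  (* optimal solution *)
  (xs : 'I_N -> R -> R) (ys : R -> R) (us : 'I_N -> R -> R)
  (Hopt : optimal T E alpha beta L U x0 pi xhat xs ys us)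
  (* multipliers *)
  (pistar : R) (p q : 'I_N -> R -> R)
  (mu l : 'I_N -> {finite_measure set (measurableTypeR R) -> \bar R})
  (Hmult : multipliers T alpha beta L U pi xs us pistar p q mu l) :
  forall i : 'I_N, {ae @leb R, forall t : R, I0T T t ->
    [/\ 0 < pistar - pi t - beta i * q i t -> us i t = 1,
        pistar - pi t - beta i * q i t < 0 -> us i t = 0,
        pistar - pi t - beta i * q i t = 0 -> xs i t = L i ->
          us i t = uunder alpha beta L xhat i t &
        pistar - pi t - beta i * q i t = 0 -> xs i t = U i ->
          us i t = uover alpha beta U xhat i t]}.
Proof.
move=> i.
case: Hopt => [[Hmeas Hu01 Hx Hder _] _].
case: Hmult => _ _ _ _ Hmax.
have H3 : almost_everywhere (@leb R) (fun t => t != 0 /\ t != T).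
  rewrite /almost_everywhere /leb /=.
  have N0 : (@lebesgue_measure R).-negligible ([set 0] `|` [set T]).
    apply: negligibleU; apply/negligibleP => //; exact: lebesgue_measure_set1.
  apply: (negligibleS _ N0).
  move=> t /= /not_andP [] /negP/negbNE/eqP ->.
    by left. by right.
have Hd := Hder i.
rewrite /prop_near1 /nbhs /= in Hd Hmax *.
rewrite /leb in Hd Hmax H3 *.
have FF : Filter (almost_everywhere (@lebesgue_measure R)) by exact: ae_filter_ringOfSetsType.
refine (filter_app FF _ H3); refine (filter_app FF _ Hmax); refine (filter_app FF _ Hd).
apply: aeW => t hd hm [t0 tT] It.
have It' : 0 <= t <= T by move: It; rewrite /I0T /= in_itv /=.
have hm' := hm It'.
have u01 := Hu01 i t It'.
have hdt := hd It.
set c := pistar - pi t - beta i * q i t.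
have key : forall a, 0 <= a <= 1 -> c * a <= c * us i t.
  move=> a a01.
  have := hm' (fun j => if j == i then a else us j t).
  have -> : \sum_(i0 < N) (pistar - pi t - beta i0 * q i0 t) * us i0 t =
     c * us i t + \sum_(j < N | j != i) (pistar - pi t - beta j * q j t) * us j t.
    by rewrite (bigD1 i).
  rewrite (bigD1 i) //= eqxx.
  rewrite (eq_bigr (fun j => (pistar - pi t - beta j * q j t) * us j t)); last first.
    by move=> j /negbTE ->.
  rewrite lerD2r; apply => j; case: (j == i) => //; exact: Hu01.
have tin : t \in `]0, T[%R.
  rewrite in_itv /= !lt_def; case/andP: It' => -> ->; rewrite !andbT.
  by apply/andP; split; [exact: t0 | rewrite eq_sym; exact: tT].
have hx := Hx i; case: hx => _ _ hxb.
have xin : forall t', t' \in `]0, T[%R -> 0 <= t' <= T.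
  by move=> t'; rewrite in_itv /= => /andP [h1 h2]; rewrite !ltW.
split.
- move=> cpos; apply/eqP; rewrite eq_le; case/andP: u01 => _ -> /=.
  have h1 : c * 1 <= c * us i t by apply: key; rewrite ler01 lexx.
  by rewrite ler_pM2l // in h1.
- move=> cneg; apply/eqP; rewrite eq_le; case/andP: u01 => -> _.
  have h1 : c * 0 <= c * us i t by apply: key; rewrite ler01 lexx.
  by rewrite ler_nM2l // in h1; rewrite h1.
- move=> _ hxL.
  have d0 : is_derive t 1 (- xs i) 0.
    apply: (fermat_min (ltW HT) (@ex_derive _ _ _ _ _ _ _ hdt) tin) => t' /xin /hxb /andP [+ _].
    by rewrite hxL.
  have d1 : is_derive t 1 (- xs i) (- (- alpha i * (xs i t - xhat t) - beta i * us i t)).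
    exact: is_deriveN.
  have := @derive_val _ _ _ _ _ _ _ d1; rewrite (@derive_val _ _ _ _ _ _ _ d0) => /esym/eqP; rewrite oppr_eq0 hxL => /eqP hD.
  have HLt := HL i t It'.
  have bne0 : beta i != 0.
    apply/negP => /eqP b0; move: hD; rewrite b0 mul0r subr0 => hD.
    by move: HLt; rewrite hD ltxx.
  rewrite /uunder; apply: (mulfI bne0).
  rewrite mulrA (mulrCA (beta i)) divff // mulr1.
  move: hD; set a := alpha i; set b := beta i; set u := us i t; set xh := xhat t; set l0 := L i.
  move=> hD. apply/eqP; rewrite -subr_eq0 -oppr_eq0; apply/eqP; rewrite -[RHS]hD; ring.
- move=> _ hxU.
  have d0 : is_derive t 1 (- (- xs i)) 0.
    apply: (fermat_min (ltW HT) (derivableN (@ex_derive _ _ _ _ _ _ _ hdt)) tin) => t' /xin /hxb /andP [_ +].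
    by rewrite /= lerN2 hxU.
  have d1 : is_derive t 1 (- (- xs i)) (- - (- alpha i * (xs i t - xhat t) - beta i * us i t)).
    by apply: is_deriveN; apply: is_deriveN.
  have := @derive_val _ _ _ _ _ _ _ d1; rewrite (@derive_val _ _ _ _ _ _ _ d0) opprK => /esym; rewrite hxU => hD.
  have HUt := HU i t It'.
  have bne0 : beta i != 0.
    apply/negP => /eqP b0; move: hD HUt; rewrite b0 mul0r subr0 => ->.
    by rewrite ltxx.
  rewrite /uover; apply: (mulfI bne0).
  rewrite mulrA (mulrCA (beta i)) divff // mulr1.
  move: hD; set a := alpha i; set b := beta i; set u := us i t; set xh := xhat t; set l0 := U i.
  move=> hD. apply/eqP; rewrite -subr_eq0 -oppr_eq0; apply/eqP; rewrite -[RHS]hD; ring.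
Qed.
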